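(* Let $a,b\in C\ell_{1,2}$. If $\mathrm{Cim}(a)\neq\mathrm{Cim}(b)$, $\mathrm{Cim}(a)\neq 0$, $\mathrm{Cim}(b)\neq 0$ and $P(\mathrm{Cim}(a))=P(\mathrm{Cim}(b))=0$, then at least one of the four elements $\mathrm{Cim}(a)e_t+e_t\,\mathrm{Cim}(b)$, $t=0,1,2,3$, is invertible.
   Context: $C\ell_{1,2}$ is the real Clifford algebra generated by $i_1,i_2,i_3$ with $i_1^2=1$, $i_2^2=i_3^2=-1$ and $i_ti_m=-i_mi_t$ for $t\neq m$, with real basis $e_0=1$, $e_1=i_1$, $e_2=i_2$, $e_3=i_1i_2$, $e_4=i_3$, $e_5=i_1i_3$, $e_6=i_2i_3$, $e_7=i_1i_2i_3$. For $a=\sum_{t=0}^7 a_te_t$: $\mathrm{Cim}(a)=a_1e_1+a_2e_2+a_3e_3+a_4e_4+a_5e_5+a_6e_6$; $N(a)=a_0^2-a_1^2+a_2^2-a_3^2+a_4^2-a_5^2+a_6^2-a_7^2$; $T(a)=a_0a_7+a_2a_5-a_1a_6-a_3a_4$; $P(a)=N(a)^2+4T(a)^2$. An element $c$ is invertible if there is $d$ with $cd=dc=1$; this holds iff $P(c)\neq 0$. *)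

(* Defs.v *)
From HB Require Import structures.
From mathcomp Require Import all_boot all_order all_algebra.
From mathcomp Require Import reals.
Set Implicit Arguments. Unset Strict Implicit. Unset Printing Implicit Defensive.
Import Order.TTheory GRing.Theory Num.Theory.
Local Open Scope ring_scope.

(* Elements of Cl_{1,2}: coefficient vectors (a_0,...,a_7) w.r.t. the basis
   e_0=1, e_1=i1, e_2=i2, e_3=i1i2, e_4=i3, e_5=i1i3, e_6=i2i3, e_7=i1i2i3.
   The index t of e_t is the bitmask of the generators (bit0=i1, bit1=i2,
   bit2=i3) occurring in it, in increasing order. *)
Definition cl (R : realType) := {ffun 'I_8 -> R}.

Definition bitn (n k : nat) : bool := odd (n %/ 2 ^ k).

(* index of the blade e_i e_j (up to sign) *)
Definition xorn (i j : nat) : nat :=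
  (bitn i 0 != bitn j 0) + 2 * (bitn i 1 != bitn j 1) + 4 * (bitn i 2 != bitn j 2).

(* exponent of -1 in e_i e_j = +- e_(xorn i j):
   number of transpositions needed to sort the generators, plus the number
   of common generators squaring to -1 (i2^2 = i3^2 = -1, i1^2 = 1). *)
Definition sgnexp (i j : nat) : nat :=
  (bitn j 0 && bitn i 1) + (bitn j 0 && bitn i 2) + (bitn j 1 && bitn i 2)
  + (bitn i 1 && bitn j 1) + (bitn i 2 && bitn j 2).

Definition clmul (R : realType) (a b : cl R) : cl R :=
  [ffun k : 'I_8 => \sum_(i < 8) \sum_(j < 8)
     (if xorn i j == k then (-1) ^+ sgnexp i j * a i * b j else 0)].

Definition cle (R : realType) (t : nat) : cl R := [ffun k : 'I_8 => ((k : nat) == t)%:R].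

Definition clone (R : realType) : cl R := cle R 0.

Definition coef (R : realType) (a : cl R) (t : nat) : R := a (inord t).

Definition Cim (R : realType) (a : cl R) : cl R :=
  [ffun k : 'I_8 => if ((k : nat) == 0%N) || ((k : nat) == 7%N) then 0 else a k].

Definition Nf (R : realType) (a : cl R) : R :=
  coef a 0 ^+ 2 - coef a 1 ^+ 2 + coef a 2 ^+ 2 - coef a 3 ^+ 2
  + coef a 4 ^+ 2 - coef a 5 ^+ 2 + coef a 6 ^+ 2 - coef a 7 ^+ 2.

Definition Tf (R : realType) (a : cl R) : R :=
  coef a 0 * coef a 7 + coef a 2 * coef a 5 - coef a 1 * coef a 6 - coef a 3 * coef a 4.

Definition Pf (R : realType) (a : cl R) : R := Nf a ^+ 2 + 4 * Tf a ^+ 2.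

Definition cl_invertible (R : realType) (c : cl R) : Prop :=
  exists d : cl R, clmul c d = clone R /\ clmul d c = clone R.

(* Main.v *)
Require Import Defs.
From HB Require Import structures.
From mathcomp Require Import all_boot all_order all_algebra.
From mathcomp Require Import reals.
From mathcomp Require Import ring lra.
Import Order.TTheory GRing.Theory Num.Theory.
Set Implicit Arguments. Unset Strict Implicit.
Local Open Scope ring_scope.

Definition mk (R : realType) (c0 c1 c2 c3 c4 c5 c6 c7 : R) : cl R :=
  [ffun k : 'I_8 => nth 0 [:: c0; c1; c2; c3; c4; c5; c6; c7] k].

Lemma sum8 (R : realType) (F : 'I_8 -> R) :
  \sum_(i < 8) F i = F (inord 0) + F (inord 1) + F (inord 2) + F (inord 3)
    + F (inord 4) + F (inord 5) + F (inord 6) + F (inord 7).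
Proof.
rewrite (eq_bigr (fun i : 'I_8 => F (inord i))); last by move=> i _; rewrite inord_val.
rewrite -(big_mkord xpredT (fun i => F (inord i))) /index_iota /=.
by rewrite !big_cons big_nil !addrA addr0.
Qed.

Lemma clmul_mk (R : realType) (a0 a1 a2 a3 a4 a5 a6 a7 b0 b1 b2 b3 b4 b5 b6 b7 : R) :
  clmul (mk a0 a1 a2 a3 a4 a5 a6 a7) (mk b0 b1 b2 b3 b4 b5 b6 b7) =
  mk (a0 * b0 + a1 * b1 - a2 * b2 + a3 * b3 - a4 * b4 + a5 * b5 - a6 * b6 - a7 * b7) (a0 * b1 + a1 * b0 + a2 * b3 - a3 * b2 + a4 * b5 - a5 * b4 - a6 * b7 - a7 * b6) (a0 * b2 + a1 * b3 + a2 * b0 - a3 * b1 + a4 * b6 - a5 * b7 - a6 * b4 - a7 * b5) (a0 * b3 + a1 * b2 - a2 * b1 + a3 * b0 - a4 * b7 + a5 * b6 - a6 * b5 - a7 * b4) (a0 * b4 + a1 * b5 - a2 * b6 + a3 * b7 + a4 * b0 - a5 * b1 + a6 * b2 + a7 * b3) (a0 * b5 + a1 * b4 + a2 * b7 - a3 * b6 - a4 * b1 + a5 * b0 + a6 * b3 + a7 * b2) (a0 * b6 + a1 * b7 + a2 * b4 - a3 * b5 - a4 * b2 + a5 * b3 + a6 * b0 + a7 * b1) (a0 * b7 + a1 * b6 - a2 * b5 + a3 * b4 + a4 * b3 - a5 * b2 + a6 * b1 + a7 * b0).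
Proof.
apply/ffunP => k; rewrite !ffunE sum8 !sum8 !ffunE !inordK //.
by case: k => [[|[|[|[|[|[|[|[|//]]]]]]]] Hk] /=; ring.
Qed.

Lemma add_mk (R : realType) (a0 a1 a2 a3 a4 a5 a6 a7 b0 b1 b2 b3 b4 b5 b6 b7 : R) :
  mk a0 a1 a2 a3 a4 a5 a6 a7 + mk b0 b1 b2 b3 b4 b5 b6 b7 =
  mk (a0 + b0) (a1 + b1) (a2 + b2) (a3 + b3) (a4 + b4) (a5 + b5) (a6 + b6) (a7 + b7).
Proof.
by apply/ffunP => k; rewrite !ffunE; case: k => [[|[|[|[|[|[|[|[|//]]]]]]]] Hk].
Qed.

Lemma clE (R : realType) (c : cl R) :
  c = mk (c (inord 0)) (c (inord 1)) (c (inord 2)) (c (inord 3))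
         (c (inord 4)) (c (inord 5)) (c (inord 6)) (c (inord 7)).
Proof.
apply/ffunP => k; rewrite !ffunE.
by case: k => [[|[|[|[|[|[|[|[|//]]]]]]]] Hk] /=; congr (c _); apply/val_inj; rewrite /= inordK.
Qed.

Lemma Cim_mk (R : realType) (c0 c1 c2 c3 c4 c5 c6 c7 : R) :
  Cim (mk c0 c1 c2 c3 c4 c5 c6 c7) = mk 0 c1 c2 c3 c4 c5 c6 0.
Proof.
by apply/ffunP => k; rewrite !ffunE; case: k => [[|[|[|[|[|[|[|[|//]]]]]]]] Hk].
Qed.

Lemma cle0 (R : realType) : cle R 0 = mk 1 0 0 0 0 0 0 0.
Proof. by apply/ffunP => k; rewrite !ffunE; case: k => [[|[|[|[|[|[|[|[|//]]]]]]]] Hk]. Qed.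
Lemma cle1 (R : realType) : cle R 1 = mk 0 1 0 0 0 0 0 0.
Proof. by apply/ffunP => k; rewrite !ffunE; case: k => [[|[|[|[|[|[|[|[|//]]]]]]]] Hk]. Qed.
Lemma cle2 (R : realType) : cle R 2 = mk 0 0 1 0 0 0 0 0.
Proof. by apply/ffunP => k; rewrite !ffunE; case: k => [[|[|[|[|[|[|[|[|//]]]]]]]] Hk]. Qed.
Lemma cle3 (R : realType) : cle R 3 = mk 0 0 0 1 0 0 0 0.
Proof. by apply/ffunP => k; rewrite !ffunE; case: k => [[|[|[|[|[|[|[|[|//]]]]]]]] Hk]. Qed.

Definition Nq (R : realType) (c0 c1 c2 c3 c4 c5 c6 c7 : R) : R :=
  c0 ^+ 2 - c1 ^+ 2 + c2 ^+ 2 - c3 ^+ 2 + c4 ^+ 2 - c5 ^+ 2 + c6 ^+ 2 - c7 ^+ 2.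
Definition Tq (R : realType) (c0 c1 c2 c3 c4 c5 c6 c7 : R) : R :=
  c0 * c7 + c2 * c5 - c1 * c6 - c3 * c4.

Lemma Pf_mk (R : realType) (c0 c1 c2 c3 c4 c5 c6 c7 : R) :
  Pf (mk c0 c1 c2 c3 c4 c5 c6 c7) =
  Nq c0 c1 c2 c3 c4 c5 c6 c7 ^+ 2 + 4 * Tq c0 c1 c2 c3 c4 c5 c6 c7 ^+ 2.
Proof. by rewrite /Pf /Nf /Tf /coef !ffunE !inordK. Qed.

Lemma inv_mk (R : realType) (c0 c1 c2 c3 c4 c5 c6 c7 : R) :
  Pf (mk c0 c1 c2 c3 c4 c5 c6 c7) != 0 -> cl_invertible (mk c0 c1 c2 c3 c4 c5 c6 c7).
Proof.
rewrite Pf_mk /Nq /Tq.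
set Pq := (X in X != 0) => HP.
exists (mk ((- c0 * c1 ^+ 2 + c0 * c2 ^+ 2 - c0 * c3 ^+ 2 + c0 * c4 ^+ 2 - c0 * c5 ^+ 2 + c0 * c6 ^+ 2 + c0 * c7 ^+ 2 + c0 ^+ 3 - 2%:R * c1 * c6 * c7 + 2%:R * c2 * c5 * c7 - 2%:R * c3 * c4 * c7) / Pq) ((- 2%:R * c0 * c6 * c7 - c0 ^+ 2 * c1 - c1 * c2 ^+ 2 + c1 * c3 ^+ 2 - c1 * c4 ^+ 2 + c1 * c5 ^+ 2 + c1 * c6 ^+ 2 + c1 * c7 ^+ 2 + c1 ^+ 3 - 2%:R * c2 * c5 * c6 + 2%:R * c3 * c4 * c6) / Pq) ((- 2%:R * c0 * c5 * c7 - c0 ^+ 2 * c2 + 2%:R * c1 * c5 * c6 + c1 ^+ 2 * c2 + c2 * c3 ^+ 2 - c2 * c4 ^+ 2 - c2 * c5 ^+ 2 - c2 * c6 ^+ 2 + c2 * c7 ^+ 2 - c2 ^+ 3 + 2%:R * c3 * c4 * c5) / Pq) ((- 2%:R * c0 * c4 * c7 - c0 ^+ 2 * c3 + 2%:R * c1 * c4 * c6 + c1 ^+ 2 * c3 - 2%:R * c2 * c4 * c5 - c2 ^+ 2 * c3 + c3 * c4 ^+ 2 + c3 * c5 ^+ 2 - c3 * c6 ^+ 2 + c3 * c7 ^+ 2 + c3 ^+ 3) / Pq) ((2%:R * c0 * c3 * c7 - c0 ^+ 2 * c4 - 2%:R * c1 * c3 * c6 + c1 ^+ 2 * c4 + 2%:R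 * c2 * c3 * c5 - c2 ^+ 2 * c4 - c3 ^+ 2 * c4 + c4 * c5 ^+ 2 - c4 * c6 ^+ 2 + c4 * c7 ^+ 2 - c4 ^+ 3) / Pq) ((2%:R * c0 * c2 * c7 - c0 ^+ 2 * c5 - 2%:R * c1 * c2 * c6 + c1 ^+ 2 * c5 - 2%:R * c2 * c3 * c4 + c2 ^+ 2 * c5 + c3 ^+ 2 * c5 - c4 ^+ 2 * c5 - c5 * c6 ^+ 2 + c5 * c7 ^+ 2 + c5 ^+ 3) / Pq) ((2%:R * c0 * c1 * c7 - c0 ^+ 2 * c6 + 2%:R * c1 * c2 * c5 - 2%:R * c1 * c3 * c4 - c1 ^+ 2 * c6 - c2 ^+ 2 * c6 + c3 ^+ 2 * c6 - c4 ^+ 2 * c6 + c5 ^+ 2 * c6 + c6 * c7 ^+ 2 - c6 ^+ 3) / Pq) ((2%:R * c0 * c1 * c6 - 2%:R * c0 * c2 * c5 + 2%:R * c0 * c3 * c4 - c0 ^+ 2 * c7 - c1 ^+ 2 * c7 + c2 ^+ 2 * c7 - c3 ^+ 2 * c7 + c4 ^+ 2 * c7 - c5 ^+ 2 * c7 + c6 ^+ 2 * c7 - c7 ^+ 3) / Pq)).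
rewrite /clone cle0 !clmul_mk; split; congr mk; rewrite /Pq; field; exact: HP.
Qed.
Lemma prodz (R : realType) (a b c d : R) :
  a * c - b * d = 0 -> a * d + b * c = 0 -> a ^+ 2 + b ^+ 2 = 0 \/ c ^+ 2 + d ^+ 2 = 0.
Proof.
move=> h1 h2.
have : (a ^+ 2 + b ^+ 2) * (c ^+ 2 + d ^+ 2) = 0.
  have -> : (a ^+ 2 + b ^+ 2) * (c ^+ 2 + d ^+ 2) = (a * c - b * d) ^+ 2 + (a * d + b * c) ^+ 2 by ring.
  by rewrite h1 h2; ring.
by move/eqP; rewrite mulf_eq0 => /orP [/eqP h|/eqP h]; [left|right].
Qed.

Lemma sq0 (R : realType) (a b : R) : a ^+ 2 + b ^+ 2 = 0 -> a = 0 /\ b = 0.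
Proof. move=> h; split; nra. Qed.

Lemma modeq (R : realType) (a b c d : R) :
  a ^+ 2 - b ^+ 2 = c ^+ 2 - d ^+ 2 -> a * b = c * d -> a ^+ 2 + b ^+ 2 = c ^+ 2 + d ^+ 2.
Proof.
move=> h1 h2.
have h : (a ^+ 2 + b ^+ 2) ^+ 2 = (c ^+ 2 + d ^+ 2) ^+ 2.
  have -> : (a ^+ 2 + b ^+ 2) ^+ 2 = (a ^+ 2 - b ^+ 2) ^+ 2 + 4 * (a * b) ^+ 2 by ring.
  have -> : (c ^+ 2 + d ^+ 2) ^+ 2 = (c ^+ 2 - d ^+ 2) ^+ 2 + 4 * (c * d) ^+ 2 by ring.
  by rewrite h1 h2.
have ha : 0 <= a ^+ 2 + b ^+ 2 by nra.
have hc : 0 <= c ^+ 2 + d ^+ 2 by nra.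
by move/eqP: h; rewrite eqf_sqr => /orP [/eqP //|/eqP h]; nra.
Qed.

Lemma half (R : realType) (x1 x2 x3 x4 x5 x6 y1 y2 y3 y4 y5 y6 : R) :
  x1 = 0 -> x6 = 0 ->
  - x1 ^+ 2 + x2 ^+ 2 - x3 ^+ 2 + x4 ^+ 2 - x5 ^+ 2 + x6 ^+ 2 = 0 ->
  x2 * x5 - x1 * x6 - x3 * x4 = 0 ->
  - y1 ^+ 2 + y2 ^+ 2 - y3 ^+ 2 + y4 ^+ 2 - y5 ^+ 2 + y6 ^+ 2 = 0 ->
  y2 * y5 - y1 * y6 - y3 * y4 = 0 ->
  x3 * y3 - x4 * y4 = 0 -> x3 * y4 + x4 * y3 = 0 ->
  x2 * y2 - x5 * y5 = 0 -> x2 * y5 + x5 * y2 = 0 ->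
  0 < x1 ^+ 2 + x2 ^+ 2 + x3 ^+ 2 + x4 ^+ 2 + x5 ^+ 2 + x6 ^+ 2 ->
  0 < y1 ^+ 2 + y2 ^+ 2 + y3 ^+ 2 + y4 ^+ 2 + y5 ^+ 2 + y6 ^+ 2 -> False.
Proof.
move=> e1 e6 hNx hTx hNy hTy p4 q4 p2 q2 sx sy.
subst x1 x6.
have m : x2 ^+ 2 + x5 ^+ 2 = x3 ^+ 2 + x4 ^+ 2 by apply: modeq; lra.
have s2 : 0 < x2 ^+ 2 + x5 ^+ 2 by lra.
case: (prodz p2 q2) => [h|/sq0 [z2 z5]]; first lra.
case: (prodz p4 q4) => [h|/sq0 [z3 z4]]; first lra.
subst y2 y5 y3 y4.
have z1 : y1 = 0 by nra.
have z6 : y6 = 0 by nra.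
subst y1 y6; lra.
Qed.

Lemma key (R : realType) (x1 x2 x3 x4 x5 x6 y1 y2 y3 y4 y5 y6 : R) :
  - x1 ^+ 2 + x2 ^+ 2 - x3 ^+ 2 + x4 ^+ 2 - x5 ^+ 2 + x6 ^+ 2 = 0 ->
  x2 * x5 - x1 * x6 - x3 * x4 = 0 ->
  - y1 ^+ 2 + y2 ^+ 2 - y3 ^+ 2 + y4 ^+ 2 - y5 ^+ 2 + y6 ^+ 2 = 0 ->
  y2 * y5 - y1 * y6 - y3 * y4 = 0 ->
  x1 * y1 - x6 * y6 = 0 -> x1 * y6 + x6 * y1 = 0 ->
  x3 * y3 - x4 * y4 = 0 -> x3 * y4 + x4 * y3 = 0 ->
  x2 * y2 - x5 * y5 = 0 -> x2 * y5 + x5 * y2 = 0 ->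
  0 < x1 ^+ 2 + x2 ^+ 2 + x3 ^+ 2 + x4 ^+ 2 + x5 ^+ 2 + x6 ^+ 2 ->
  0 < y1 ^+ 2 + y2 ^+ 2 + y3 ^+ 2 + y4 ^+ 2 + y5 ^+ 2 + y6 ^+ 2 -> False.
Proof.
move=> hNx hTx hNy hTy p1 q1 p4 q4 p2 q2 sx sy.
case: (prodz p1 q1) => [/sq0 [z1 z6]|/sq0 [z1 z6]].
  exact: (half z1 z6 hNx hTx hNy hTy p4 q4 p2 q2 sx sy).
apply: (half (x1 := y1) (x6 := y6) z1 z6 hNy hTy hNx hTx _ _ _ _ sy sx); lra.
Qed.
Lemma mk_pos (R : realType) (c0 c1 c2 c3 c4 c5 c6 c7 : R) :
  mk c0 c1 c2 c3 c4 c5 c6 c7 != 0 ->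
  0 < c0 ^+ 2 + c1 ^+ 2 + c2 ^+ 2 + c3 ^+ 2 + c4 ^+ 2 + c5 ^+ 2 + c6 ^+ 2 + c7 ^+ 2.
Proof.
move=> H; rewrite lt_neqAle; apply/andP; split; last nra.
apply/eqP => h; move/negP: H; apply.
have z0 : c0 = 0 by nra. have z1 : c1 = 0 by nra. have z2 : c2 = 0 by nra.
have z3 : c3 = 0 by nra. have z4 : c4 = 0 by nra. have z5 : c5 = 0 by nra.
have z6 : c6 = 0 by nra. have z7 : c7 = 0 by nra.
subst; apply/eqP/ffunP => k; rewrite !ffunE.
by case: k => [[|[|[|[|[|[|[|[|//]]]]]]]] Hk].
Qed.

Lemma NT0 (R : realType) (n t : R) : n ^+ 2 + 4 * t ^+ 2 = 0 -> n = 0 /\ t = 0.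
Proof. move=> h; split; nra. Qed.

Unset Implicit Arguments. Set Strict Implicit.

Theorem lemma5p2 (R : realType) (a b : cl R) :
  Cim a != Cim b -> Cim a != 0 -> Cim b != 0 ->
  Pf (Cim a) = 0 -> Pf (Cim b) = 0 ->
  exists t : 'I_4,
    cl_invertible (clmul (Cim a) (cle R t) + clmul (cle R t) (Cim b)).
Proof.
move=> _ ha hb hPa hPb.
rewrite (clE a) (clE b) !Cim_mk in ha hb hPa hPb *.
move: ha hb hPa hPb.
move: (a (inord 1)) (a (inord 2)) (a (inord 3)) (a (inord 4)) (a (inord 5)) (a (inord 6))
  (b (inord 1)) (b (inord 2)) (b (inord 3)) (b (inord 4)) (b (inord 5)) (b (inord 6))
  => a1 a2 a3 a4 a5 a6 b1 b2 b3 b4 b5 b6 ha hb hPa hPb.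
have sx := mk_pos ha. have sy := mk_pos hb.
rewrite Pf_mk in hPa; case: (NT0 hPa) => hNx hTx.
rewrite Pf_mk in hPb; case: (NT0 hPb) => hNy hTy.
case: (eqVneq (Pf (clmul (mk 0 a1 a2 a3 a4 a5 a6 0) (cle R 0) + clmul (cle R 0) (mk 0 b1 b2 b3 b4 b5 b6 0))) 0) => [h0|h0]; last first.
  by exists ord0; move: h0; rewrite /= cle0 !clmul_mk add_mk; exact: inv_mk.
case: (eqVneq (Pf (clmul (mk 0 a1 a2 a3 a4 a5 a6 0) (cle R 1) + clmul (cle R 1) (mk 0 b1 b2 b3 b4 b5 b6 0))) 0) => [h1|h1]; last first.
  by exists (inord 1); move: h1; rewrite inordK // cle1 !clmul_mk add_mk; exact: inv_mk.
case: (eqVneq (Pf (clmul (mk 0 a1 a2 a3 a4 a5 a6 0) (cle R 2) + clmul (cle R 2) (mk 0 b1 b2 b3 b4 b5 b6 0))) 0) => [h2|h2]; last first.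
  by exists (inord 2); move: h2; rewrite inordK // cle2 !clmul_mk add_mk; exact: inv_mk.
case: (eqVneq (Pf (clmul (mk 0 a1 a2 a3 a4 a5 a6 0) (cle R 3) + clmul (cle R 3) (mk 0 b1 b2 b3 b4 b5 b6 0))) 0) => [h3|h3]; last first.
  by exists (inord 3); move: h3; rewrite inordK // cle3 !clmul_mk add_mk; exact: inv_mk.
exfalso.
rewrite cle0 !clmul_mk add_mk Pf_mk in h0; case: (NT0 h0) => hN0 hT0.
rewrite cle1 !clmul_mk add_mk Pf_mk in h1; case: (NT0 h1) => hN1 hT1.
rewrite cle2 !clmul_mk add_mk Pf_mk in h2; case: (NT0 h2) => hN2 hT2.
rewrite cle3 !clmul_mk add_mk Pf_mk in h3; case: (NT0 h3) => hN3 hT3.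
move: hNx hTx hNy hTy hN0 hT0 hN1 hT1 hN2 hT2 hN3 hT3; rewrite /Nq /Tq => hNx hTx hNy hTy hN0 hT0 hN1 hT1 hN2 hT2 hN3 hT3.
apply: (key (x1 := a1) (x2 := a2) (x3 := a3) (x4 := a4) (x5 := a5) (x6 := a6)
            (y1 := b1) (y2 := b2) (y3 := b3) (y4 := b4) (y5 := b5) (y6 := b6)); lra.
Qed.
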